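(* Let $n\ge1$, let $L\subseteq\mathbb Z^n$ be a lattice, and let $(\cdot,\cdot)$ be an inner product on $\mathbb R^n$ for which the canonical basis $\vec e_1,\dots,\vec e_n$ is orthogonal. Assume $(L,(\cdot,\cdot))$ is a zonotopal lattice. Let $F$ be the linear subspace of $\mathbb R^n$ spanned by $L$ and let $\pi:\mathbb R^n\to F$ be the orthogonal projection onto $F$ with respect to $(\cdot,\cdot)$. Then $$\mathrm{DV}(L)=\pi(\mathrm{DV}(\mathbb Z^n))=\pi\big([-\tfrac12,\tfrac12]^n\big),$$ where $\mathrm{DV}(L)=\{\vec x\in F: (\vec x,\vec x)\le(\vec x-\vec v,\vec x-\vec v)\text{ for all }\vec v\in L\}$ and $\mathrm{DV}(\mathbb Z^n)=\{\vec x\in \mathbb R^n: (\vec x,\vec x)\le(\vec x-\vec v,\vec x-\vec v)\text{ for all }\vec v\in \mathbb Z^n\}$ are the Dirichlet–Voronoi polytopes with respect to $(\cdot,\cdot)$.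
   Context: A lattice $L\subseteq\mathbb Z^n$ is the $\mathbb Z$-span of finitely many linearly independent vectors of $\mathbb Z^n$. The support of $\vec v\in\mathbb R^n$ is $\underline{\vec v}=\{i: v_i\neq 0\}$. A vector $\vec u\in L$ is elementary if $\vec u\in\{-1,0,+1\}^n\setminus\{\vec 0\}$ and no nonzero vector of $L$ has support strictly contained in $\underline{\vec u}$. The pair $(L,(\cdot,\cdot))$ is a zonotopal lattice if for every $\vec v\in L\setminus\{\vec 0\}$ there is an elementary vector $\vec u\in L$ with $\underline{\vec u}\subseteq\underline{\vec v}$. *)

(* Defs.v *)
From HB Require Import structures.
From mathcomp Require Import all_boot all_order all_algebra.
From mathcomp Require Import classical_sets reals.
Set Implicit Arguments. Unset Strict Implicit. Unset Printing Implicit Defensive.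
Import Order.TTheory GRing.Theory Num.Theory.
Local Open Scope ring_scope.
Local Open Scope classical_set_scope.

Definition toR (R : realType) (m n : nat) (A : 'M[int]_(m, n)) : 'M[R]_(m, n) :=
  map_mx (fun z : int => z%:~R) A.

Definition lattice (k n : nat) (B : 'M[int]_(k, n)) : set 'rV[int]_n :=
  range (fun c : 'rV[int]_k => c *m B).

Definition supp (n : nat) (v : 'rV[int]_n) : {set 'I_n} :=
  finset (fun i => v ord0 i != 0).

Definition elementary (n : nat) (L : set 'rV[int]_n) (u : 'rV[int]_n) : Prop :=
  [/\ L u,
      (forall i, u ord0 i \in [:: -1; 0; 1]),
      u != 0
    & ~ (exists v, [/\ L v, v != 0 & (supp v \proper supp u)%SET])].

Definition zonotopal (n : nat) (L : set 'rV[int]_n) : Prop :=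
  forall v, L v -> v != 0 ->
    exists u, elementary L u /\ (supp u \subset supp v)%SET.

Definition ip (R : realType) (n : nat) (G : 'M[R]_n) (x y : 'rV[R]_n) : R :=
  (x *m G *m y^T) ord0 ord0.

Definition is_inner_product (R : realType) (n : nat) (G : 'M[R]_n) : Prop :=
  G^T = G /\ (forall x : 'rV[R]_n, x != 0 -> 0 < ip G x x).

(* the canonical basis is orthogonal: (e_i, e_j) = G i j = 0 for i <> j *)
Definition canonical_basis_orthogonal (R : realType) (n : nat) (G : 'M[R]_n) :=
  forall i j : 'I_n, i != j -> G i j = 0.

Definition span_lat (R : realType) (k n : nat) (B : 'M[int]_(k, n)) : set 'rV[R]_n :=
  range (fun c : 'rV[R]_k => c *m toR R B).

Definition DV_lat (R : realType) (k n : nat) (G : 'M[R]_n) (B : 'M[int]_(k, n))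
  : set 'rV[R]_n :=
  [set x | span_lat (R:=R) B x /\
     forall v, lattice B v -> ip G x x <= ip G (x - toR R v) (x - toR R v)].

Definition DV_Zn (R : realType) (n : nat) (G : 'M[R]_n) : set 'rV[R]_n :=
  [set x | forall v : 'rV[int]_n, ip G x x <= ip G (x - toR R v) (x - toR R v)].

Definition cube (R : realType) (n : nat) : set 'rV[R]_n :=
  [set x | forall i, - (1 / 2) <= x ord0 i <= 1 / 2].

Definition is_orth_proj (R : realType) (n : nat) (G : 'M[R]_n) (F : set 'rV[R]_n)
  (x y : 'rV[R]_n) : Prop :=
  F y /\ forall z, F z -> ip G (x - y) z = 0.

Definition proj_image (R : realType) (n : nat) (G : 'M[R]_n) (F : set 'rV[R]_n)
  (S : set 'rV[R]_n) : set 'rV[R]_n :=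
  [set y | exists2 x, S x & is_orth_proj G F x y].

(* Main.v *)
Require Import Defs.
From HB Require Import structures.
From mathcomp Require Import all_boot all_order all_algebra.
From mathcomp Require Import boolp classical_sets reals ring lra zify.
From mathcomp Require Import topology normedtype derive matrix_normedtype.
Import Order.TTheory GRing.Theory Num.Theory.
Import numFieldNormedType.Exports.
Local Open Scope ring_scope.
Local Open Scope classical_set_scope.
Set Implicit Arguments. Unset Strict Implicit. Unset Printing Implicit Defensive.

Section IP.
Variables (R : realType) (n : nat) (G : 'M[R]_n).

Lemma ipDl x y z : ip G (x + y) z = ip G x z + ip G y z.
Proof. by rewrite /ip !mulmxDl mxE. Qed.
Lemma ipDr x y z : ip G x (y + z) = ip G x y + ip G x z.
Proof. by rewrite /ip linearD /= mulmxDr mxE. Qed.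
Lemma ipNl x z : ip G (- x) z = - ip G x z.
Proof. by rewrite /ip !mulNmx mxE. Qed.
Lemma ipNr x z : ip G x (- z) = - ip G x z.
Proof. by rewrite /ip linearN /= mulmxN mxE. Qed.
Lemma ipBl x y z : ip G (x - y) z = ip G x z - ip G y z.
Proof. by rewrite ipDl ipNl. Qed.
Lemma ipBr x y z : ip G x (y - z) = ip G x y - ip G x z.
Proof. by rewrite ipDr ipNr. Qed.
Lemma ipZl a x z : ip G (a *: x) z = a * ip G x z.
Proof. by rewrite /ip -!scalemxAl mxE. Qed.
Lemma ip0l z : ip G 0 z = 0.
Proof. by rewrite /ip !mul0mx mxE. Qed.

Lemma ip_sym : G^T = G -> forall x y, ip G x y = ip G y x.
Proof.
move=> HS x y; rewrite /ip.
transitivity ((x *m G *m y^T)^T ord0 ord0); first by rewrite [RHS]mxE.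
by rewrite !trmx_mul trmxK HS mulmxA.
Qed.

Lemma ip_diag : canonical_basis_orthogonal G ->
  forall x y, ip G x y = \sum_i G i i * x ord0 i * y ord0 i.
Proof.
move=> HG x y; rewrite /ip mxE; apply: eq_bigr => j _.
rewrite !mxE (bigD1 j) //= big1 ?addr0.
  by rewrite [x _ _ * _]mulrC.
by move=> i ij; rewrite HG ?mul0r ?mulr0.
Qed.

Lemma ip_expand : G^T = G -> forall x v,
  ip G (x - v) (x - v) = ip G x x - 2 * ip G x v + ip G v v.
Proof.
move=> HS x v; rewrite ipBl !ipBr (ip_sym HS v x); lra.
Qed.

End IP.
Lemma int_sq_ge_norm (z : int) : `|z| <= z * z.
Proof.
have [->|nz] := eqVneq z 0; first by [].
have h : 1 <= `|z| by rewrite -gtz0_ge1 normr_gt0.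
rewrite -[z * z]ger0_norm ?sqr_ge0 // normrM.
by rewrite ler_peMr.
Qed.
Lemma two_x_z_le (R : realType) (z : int) (x : R) : - (1/2) <= x <= 1/2 -> 2 * x * z%:~R <= z%:~R * z%:~R.
Proof.
move=> /andP[h1 h2].
have h3 : `|z%:~R| <= z%:~R * z%:~R :> R.
  by rewrite -intr_norm -intrM ler_int int_sq_ge_norm.
set Z := (z%:~R : R) in h3 *.
have [h5|h5] := lerP 0 Z.
  rewrite ger0_norm // in h3.
  have : 0 <= Z * (1 - 2 * x) by apply: mulr_ge0; lra.
  lra.
rewrite ltr0_norm // in h3.
have : Z * (1 + 2 * x) <= 0 by apply: mulr_le0_ge0; lra.
lra.
Qed.


Section DVZ.
Variables (R : realType) (n : nat) (G : 'M[R]_n).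
Hypotheses (HP : is_inner_product G) (HG : canonical_basis_orthogonal G).

Lemma toRE (m : nat) (v : 'M[int]_(1, m)) i : toR R v ord0 i = (v ord0 i)%:~R.
Proof. by rewrite mxE. Qed.

Lemma toRN (a b : nat) (v : 'M[int]_(a, b)) : toR R (- v) = - toR R v.
Proof. by rewrite /toR map_mxN. Qed.

Lemma ip_delta (x : 'rV[R]_n) i : ip G x (delta_mx 0 i) = G i i * x ord0 i.
Proof.
rewrite (ip_diag HG) (bigD1 i) //= big1 ?addr0; first by rewrite mxE !eqxx mulr1.
by move=> j ji; rewrite mxE (negbTE ji) andbF mulr0.
Qed.

Lemma Gii_pos i : 0 < G i i.
Proof.
have := HP.2 (delta_mx 0 i); rewrite ip_delta mxE !eqxx mulr1; apply.
apply/negP => /eqP/matrixP/(_ ord0 i); rewrite !mxE !eqxx => /eqP.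
by rewrite oner_eq0.
Qed.

Lemma toR_delta i : toR R (delta_mx (0 : 'I_1) i) = delta_mx 0 i :> 'rV[R]_n.
Proof. by apply/matrixP => a b; rewrite !mxE; case: (_ && _). Qed.

Lemma DV_Zn_cube : DV_Zn G = @cube R n.
Proof.
have HS := HP.1.
rewrite /DV_Zn /cube; apply/funext => x /=; apply/propext; split.
- move=> H i.
  have h1 := H (delta_mx 0 i).
  have h2 := H (- delta_mx 0 i).
  rewrite !ip_expand // toR_delta in h1.
  rewrite !ip_expand // toRN toR_delta ipNr ipNl ipNr opprK in h2.
  rewrite !ip_delta mxE !eqxx mulr1 in h1 h2.
  have := Gii_pos i => hg.
  have a1 : G i i * x ord0 i <= G i i * (1/2) by nra.
  have a2 : G i i * (- (1/2)) <= G i i * x ord0 i by nra.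
  rewrite ler_pM2l // in a1; rewrite ler_pM2l // in a2.
  by rewrite a1 a2.
- move=> H v.
  rewrite ip_expand //.
  suff : 2 * ip G x (toR R v) <= ip G (toR R v) (toR R v) by lra.
  rewrite !(ip_diag HG) mulr_sumr; apply: ler_sum => i _.
  rewrite !toRE.
  have := two_x_z_le (v ord0 i) (H i) => h.
  have := Gii_pos i => hg.
  nra.
Qed.

End DVZ.

Section PROJ.
Variables (R : realType) (n k : nat) (B : 'M[int]_(k, n)) (G : 'M[R]_n).
Hypotheses (HP : is_inner_product G) (Hfree : row_free (toR R B)).

Let Br := toR R B.
Definition Gram := Br *m G *m Br^T.

Lemma ip_row (c : 'rV[R]_k) : ip G (c *m Br) (c *m Br) = (c *m Gram *m c^T) ord0 ord0.
Proof. by rewrite /ip /Gram trmx_mul !mulmxA. Qed.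

Lemma Gram_unit : Gram \in unitmx.
Proof.
rewrite -row_free_unit -kermx_eq0; apply/eqP/row_matrixP => i; rewrite row0.
set c := row i _.
have hc : c *m Gram = 0 by apply/eqP; rewrite -sub_kermx row_sub.
have : c *m Br == 0.
  apply/negPn/negP => /(HP.2); rewrite ip_row hc mul0mx mxE.
  by rewrite ltxx.
by rewrite mulmx_free_eq0 // => /eqP.
Qed.

Definition Pj := G *m Br^T *m invmx Gram *m Br.

Lemma Pj_orth (x : 'rV[R]_n) : (x - x *m Pj) *m G *m Br^T = 0.
Proof.
rewrite mulmxBl mulmxBl /Pj !mulmxA.
have -> : x *m G *m Br^T *m invmx Gram *m Br *m G *m Br^T
   = x *m G *m Br^T *m (invmx Gram *m Gram) by rewrite /Gram !mulmxA.
by rewrite mulVmx ?Gram_unit // mulmx1 subrr.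
Qed.

Lemma projP (x : 'rV[R]_n) z : span_lat B z -> ip G (x - x *m Pj) z = 0.
Proof.
case=> c _ <-; rewrite /ip -/Br trmx_mul mulmxA Pj_orth mul0mx mxE //.
Qed.

Lemma proj_span (x : 'rV[R]_n) : span_lat B (x *m Pj).
Proof. by exists (x *m G *m Br^T *m invmx Gram) => //; rewrite /Pj !mulmxA. Qed.

Lemma ip_projl (x : 'rV[R]_n) z : span_lat B z -> ip G (x *m Pj) z = ip G x z.
Proof. by move=> /(projP x); rewrite ipBl => /eqP; rewrite subr_eq0 => /eqP. Qed.

End PROJ.

Lemma toRM (R : realType) (a b c : nat) (A : 'M[int]_(a, b)) (C : 'M[int]_(b, c)) :
  toR R (A *m C) = toR R A *m toR R C.
Proof. by rewrite /toR map_mxM. Qed.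

Lemma toR_inj (R : realType) (a b : nat) : injective (@toR R a b).
Proof.
move=> A C /matrixP h; apply/matrixP => i j; have := h i j.
by rewrite !mxE => /eqP; rewrite eqr_int => /eqP.
Qed.

Lemma lattice_span (R : realType) (n k : nat) (B : 'M[int]_(k, n)) v :
  lattice B v -> span_lat (R:=R) B (toR R v).
Proof. by case=> c _ <-; exists (toR R c) => //; rewrite toRM. Qed.

Lemma oppmxE (R : ringType) m n (A : 'M[R]_(m, n)) i j : (- A) i j = - A i j.
Proof. by rewrite mxE. Qed.

Section SUPP.
Variables (R : realType) (n k : nat) (B : 'M[int]_(k, n)).
Hypothesis (Hfree : row_free (toR R B)).

Lemma lattice_sub (v : 'rV[R]_n) : span_lat B v -> v != 0 ->
  exists z, [/\ lattice B z, z != 0 & forall i, v ord0 i = 0 -> z ord0 i = 0].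
Proof.
case=> c _ vE vnz.
pose E : 'M[int]_n := \matrix_(i, j) ((i == j) && (v ord0 j == 0))%:R.
have hE : forall (w : 'rV[int]_n) j, (w *m E) ord0 j = if v ord0 j == 0 then w ord0 j else 0.
  move=> w j; rewrite mxE (bigD1 j) //= big1 ?addr0.
    by rewrite mxE eqxx /=; case: eqP => _; rewrite ?mulr1 ?mulr0.
  by move=> i ij; rewrite mxE (negbTE ij) /= mulr0.
pose Q := map_mx (intr : int -> rat) (B *m E).
have hR : toR R (B *m E) = map_mx ratr Q.
  by apply/matrixP => i j; rewrite !mxE ratr_int.
have cker : c *m toR R (B *m E) = 0.
  rewrite toRM mulmxA vE; apply/rowP => j; rewrite !mxE (bigD1 j) //= big1 ?addr0.
    by rewrite !mxE eqxx /=; case: eqP => [->|_]; rewrite ?mul0r ?mulr0.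
  by move=> i ij; rewrite !mxE (negbTE ij) /= mulr0.
have nfree : ~~ row_free Q.
  apply/negP => fr.
  have : row_free (toR R (B *m E)) by rewrite hR /row_free mxrank_map.
  move=> /(mulmx_free_eq0 c); rewrite cker eqxx => /esym/eqP c0.
  by move: vnz; rewrite -vE c0 mul0mx eqxx.
have kQ : kermx Q != 0 by rewrite kermx_eq0.
have [i hi] : exists i, row i (kermx Q) != 0.
  apply/existsP; move: (kermx Q) kQ => K; apply: contraNT => /existsPn h.
  by apply/eqP/row_matrixP => i; rewrite row0; apply/eqP/negPn/h.
set c' := row i (kermx Q) in hi.
have hc' : c' *m Q = 0 by apply/eqP; rewrite -sub_kermx row_sub.
clearbody c'.
pose ci : 'rV[int]_k := \row_j (numq (c' ord0 j) * \prod_(l | l != j) denq (c' ord0 l)).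
pose D : rat := \prod_l (denq (c' ord0 l))%:~R.
have ciE : map_mx (intr : int -> rat) ci = D *: c'.
  apply/rowP => j; rewrite !mxE intrM numqE rmorph_prod /D [X in _ = X * _](bigD1 j) //=.
  by rewrite [RHS]mulrC mulrA.
exists (ci *m B); split.
- by exists ci.
- apply/negP => /eqP z0.
  have : toR R ci *m toR R B = 0 by rewrite -toRM z0; apply/matrixP => a b; rewrite !mxE.
  move/eqP; rewrite mulmx_free_eq0 // => /eqP.
  have -> : (0 : 'rV[R]_k) = toR R 0 by apply/matrixP => a b; rewrite !mxE.
  move/toR_inj => ci0.
  move: hi; apply/negP; rewrite negbK; apply/eqP/rowP => j.
  move/rowP: ci0 => /(_ j); rewrite !mxE => /eqP; rewrite mulf_eq0 numq_eq0.
  case/orP => [/eqP -> //|].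
  by move/prodf_neq0: (fun l (_ : l != j) => denq_neq0 (c' ord0 l)) => /negPf ->.
- move=> j vj.
  have : (ci *m (B *m E)) = 0.
    have h : map_mx (intr : int -> rat) (ci *m (B *m E)) = 0.
      by rewrite map_mxM ciE -scalemxAl hc' scaler0.
    apply/matrixP => a b; move/matrixP: h => /(_ a b).
    by rewrite !mxE => /eqP; rewrite intr_eq0 => /eqP.
  by move/rowP => /(_ j); rewrite mulmxA hE vj eqxx => ->; rewrite mxE.
Qed.

End SUPP.

Lemma sq_pos (R : realType) (x : R) : x != 0 -> 0 < x * x.
Proof. by move=> hx; rewrite lt0r mulf_neq0 //=; nra. Qed.

Definition conf (R : realType) (n : nat) (v r : 'rV[R]_n) : Prop :=
  forall i, v ord0 i != 0 -> 0 < v ord0 i * r ord0 i.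
Definition rsupp (R : realType) (n : nat) (v : 'rV[R]_n) : {set 'I_n} :=
  [set i | v ord0 i != 0].

Lemma conf_trans (R : realType) (n : nat) (w v r : 'rV[R]_n) :
  conf w v -> conf v r -> conf w r.
Proof.
move=> hwv hvr i wi.
have h1 := hwv i wi.
have vi : v ord0 i != 0 by apply/eqP => e; move: h1; rewrite e mulr0 ltxx.
have h2 := hvr i vi.
have h3 := sq_pos vi.
have e : (w ord0 i * r ord0 i) * (v ord0 i * v ord0 i)
   = (w ord0 i * v ord0 i) * (v ord0 i * r ord0 i) by ring.
have h4 : 0 < (w ord0 i * r ord0 i) * (v ord0 i * v ord0 i) by rewrite e mulr_gt0.
by rewrite pmulr_lgt0 in h4.
Qed.

Lemma span_comb (R : realType) (n k : nat) (B : 'M[int]_(k, n)) (x y : 'rV[R]_n) t :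
  span_lat B x -> span_lat B y -> span_lat B (x - t *: y).
Proof.
case=> a _ <- [b _ <-]; exists (a - t *: b) => //.
by rewrite mulmxBl scalemxAl.
Qed.

Lemma elementary_opp (n k : nat) (B : 'M[int]_(k, n)) u :
  elementary (lattice B) u -> elementary (lattice B) (- u).
Proof.
case=> [[c _ <-] hE hnz hmin]; split.
- by exists (- c) => //; rewrite mulNmx.
- move=> i; rewrite [X in X \in _]mxE; have := hE i; rewrite !inE.
  by case/or3P => /eqP ->; rewrite ?opprK ?oppr0 eqxx ?orbT.
- by rewrite oppr_eq0.
- have -> : supp (- (c *m B)) = supp (c *m B).
    by apply/setP => i; rewrite !inE mxE oppr_eq0.
  exact: hmin.
Qed.

Section CONF.
Variables (R : realType) (n k : nat) (B : 'M[int]_(k, n)).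
Hypotheses (Hfree : row_free (toR R B)) (Hz : zonotopal (lattice B)).

Lemma conf_exists (r : 'rV[R]_n) : span_lat B r -> r != 0 ->
  exists u, elementary (lattice B) u /\ conf (toR R u) r.
Proof.
move=> hr rnz.
suff H : forall m (v : 'rV[R]_n), #|rsupp v| = m -> span_lat B v -> v != 0 ->
    conf v r -> exists u, elementary (lattice B) u /\ conf (toR R u) r.
  by apply: (H _ r erefl hr rnz) => i ri; apply: sq_pos.
elim/ltn_ind => m IH v hm hv vnz hvr.
have step : forall uo, elementary (lattice B) uo ->
    (forall i, toR R uo ord0 i != 0 -> v ord0 i != 0) ->
    forall i0, 0 < toR R uo ord0 i0 * v ord0 i0 ->
    exists u, elementary (lattice B) u /\ conf (toR R u) r.
  move=> uo huo hsup i0 hi0.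
  have hU : span_lat B (toR R uo) by apply: lattice_span; case: huo.
  move: hsup hi0 hU; set U := toR R uo => hsup hi0 hU.
  pose P := [pred i | 0 < U ord0 i * v ord0 i].
  pose f := fun i => v ord0 i / U ord0 i.
  have [i1 Pi1 hmin] := @real_arg_minP R _ i0 P f hi0 (fun i _ => num_real _).
  set t := f i1.
  have Ui1 : U ord0 i1 != 0.
    by apply/eqP => e; move: Pi1; rewrite /P /= e mul0r ltxx.
  have tpos : 0 < t.
    have e : t * (U ord0 i1 * U ord0 i1) = U ord0 i1 * v ord0 i1.
      by rewrite /t /f; field.
    have := sq_pos Ui1; move: Pi1; rewrite /P /= -e => h1 h2.
    by rewrite pmulr_lgt0 in h1.
  pose w := v - t *: U.
  have wE : forall i, w ord0 i = v ord0 i - t * U ord0 i by move=> i; rewrite !mxE.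
  have cwv : conf w v.
    move=> i; rewrite wE => wi.
    have vi : v ord0 i != 0.
      have [Ui|/hsup //] := eqVneq (U ord0 i) 0.
      by move: wi; rewrite Ui mulr0 subr0.
    rewrite lt0r mulf_neq0 //=.
    have h3 := sq_pos vi.
    case: (ltrP 0 (U ord0 i * v ord0 i)) => hUv.
      have h4 : t <= f i := hmin i hUv.
      have Ui : U ord0 i != 0.
        by apply/eqP => e; move: hUv; rewrite e mul0r ltxx.
      have e : f i * (U ord0 i * v ord0 i) = v ord0 i * v ord0 i.
        by rewrite /f; field.
      have h5 : t * (U ord0 i * v ord0 i) <= f i * (U ord0 i * v ord0 i).
        by rewrite ler_pM2r.
      rewrite e in h5; nra.
    nra.
  have [w0|wnz] := eqVneq w 0.
    exists uo; split => //; apply: conf_trans hvr => i Ui.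
    have : w ord0 i = 0 by rewrite w0 mxE.
    rewrite wE => /eqP; rewrite subr_eq0 => /eqP ->.
    have := sq_pos Ui => h; nra.
  apply: (IH #|rsupp w|) => //.
  - rewrite -hm; apply: proper_card; apply/properP; split.
      by apply/fintype.subsetP => i; rewrite !inE => /cwv h; apply/eqP => e; move: h; rewrite e mulr0 ltxx.
    exists i1; rewrite !inE.
      by apply/eqP => e; move: Pi1; rewrite /P /= e mulr0 ltxx.
    by rewrite wE /t /f negbK; apply/eqP; field.
  - by apply: span_comb.
  - exact: conf_trans hvr.
have [z [hzL hz0 hzs]] := lattice_sub Hfree hv vnz.
have [u [hu hsub]] := Hz hzL hz0.
have hUv : forall i, toR R u ord0 i != 0 -> v ord0 i != 0.
  move=> i; rewrite toRE intr_eq0 => ui; apply/eqP => vi.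
  move/fintype.subsetP: hsub => /(_ i); rewrite !inE ui => /(_ isT).
  by rewrite (hzs i vi) eqxx.
have [i0 ui0] : exists i0, u ord0 i0 != 0.
  case: hu => _ _ hu0 _; apply/existsP; move: hu0; apply: contraNT => /existsPn h.
  by apply/eqP/rowP => i; rewrite mxE; apply/eqP/negPn/h.
have Ui0 : toR R u ord0 i0 != 0 by rewrite toRE intr_eq0.
have vi0 := hUv i0 Ui0.
case: (ltrP 0 (toR R u ord0 i0 * v ord0 i0)) => hs.
  exact: (step u hu hUv i0 hs).
apply: (step (- u) (elementary_opp hu) _ i0).
  by move=> i; rewrite toRN mxE oppr_eq0; apply: hUv.
have : toR R u ord0 i0 * v ord0 i0 != 0 by rewrite mulf_neq0.
rewrite toRN oppmxE mulNr oppr_gt0 => h; rewrite lt_neqAle h hs.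
done.
Qed.

End CONF.

Lemma cont_sum (R : realType) (T : topologicalType) (I : finType) (F : I -> T -> R) :
  (forall i, continuous (F i)) -> continuous (fun x => \sum_i F i x).
Proof.
move=> H.
suff Hs : forall s : seq I, continuous (fun x => \sum_(i <- s) F i x) by exact: Hs.
elim => [|a s IH].
  by under eq_fun do rewrite big_nil; exact: cst_continuous.
under eq_fun do rewrite big_cons.
by move=> y; apply: continuousD; [apply: H | apply: IH].
Qed.

Lemma contM2 (R : realType) (T : topologicalType) (f g : T -> R) :
  continuous f -> continuous g -> continuous (fun x => f x * g x).
Proof. by move=> hf hg x; apply: continuousM; [apply: hf | apply: hg]. Qed.

Lemma contB2 (R : realType) (T : topologicalType) (f g : T -> R) :
  continuous f -> continuous g -> continuous (fun x => f x - g x).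
Proof. by move=> hf hg x; apply: continuousB; [apply: hf | apply: hg]. Qed.

Lemma cont_coord (R : realType) (n m : nat) (M : 'M[R]_(n, m)) j :
  continuous (fun x : 'rV[R]_n => (x *m M) ord0 j).
Proof.
under eq_fun do rewrite mxE.
apply: cont_sum => i y; apply: continuousM; last exact: cst_continuous.
exact: coord_continuous.
Qed.

Lemma ipZr (R : realType) (n : nat) (G : 'M[R]_n) a x z :
  ip G x (a *: z) = a * ip G x z.
Proof. by rewrite /ip linearZ /= -scalemxAr mxE. Qed.

Lemma exists_nz (n : nat) (u : 'rV[int]_n) : u != 0 -> exists i, u ord0 i != 0.
Proof.
move=> hu0; apply/existsP; move: hu0; apply: contraNT => /existsPn h.
by apply/eqP/rowP => i; rewrite mxE; apply/eqP/negPn/h.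
Qed.

Lemma final_arith (R : realType) (yU rU xU UU yy : R) :
  yy <= yy - 2 * yU + UU -> yU = rU + xU -> 0 < rU -> xU * 2 = UU -> False.
Proof. lra. Qed.

Section HARD.
Variables (R : realType) (n k : nat) (B : 'M[int]_(k, n)) (G : 'M[R]_n).
Hypotheses (HP : is_inner_product G) (HG : canonical_basis_orthogonal G)
  (Hfree : row_free (toR R B)) (Hz : zonotopal (lattice B)).

Lemma ip_ge0 x : 0 <= ip G x x.
Proof.
have [->|xnz] := eqVneq x 0; first by rewrite ip0l.
exact/ltW/(HP.2).
Qed.

Lemma hard y : DV_lat G B y -> proj_image G (span_lat B) (@cube R n) y.
Proof.
case=> hy hDV.
have HS := HP.1.
pose Pm := Pj B G.
pose f := fun x : 'rV[R]_n => ip G (y - x *m Pm) (y - x *m Pm).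
have cube_eq : @cube R n = [set v | forall i, `[-(1/2), 1/2]%classic (v ord0 i)].
  apply/funext => v; apply/propext; split => h i; have := h i; by rewrite /= in_itv.
have [x xin xmin] : exists2 x, x \in @cube R n & forall t, t \in @cube R n -> f x <= f t.
  apply: EVT_min_rV.
  - by exists 0 => i; rewrite mxE; apply/andP; split; lra.
  - rewrite cube_eq; apply: (@rV_compact R n (fun _ => `[-(1/2), 1/2]%classic)) => i.
    exact: segment_compact.
  - apply: continuous_subspaceT.
    have fE : f = fun x => \sum_j ((y *m G) ord0 j - (x *m (Pm *m G)) ord0 j) *
                              (y ord0 j - (x *m Pm) ord0 j).
      apply/funext => x; rewrite /f /ip mxE; apply: eq_bigr => j _.
      by rewrite mulmxBl mulmxA !mxE.
    rewrite fE; apply: cont_sum => j.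
    apply: contM2; apply: contB2.
    + exact: cst_continuous.
    + exact: cont_coord.
    + exact: cst_continuous.
    + exact: cont_coord.
move: xin; rewrite inE => xin.
set r := y - x *m Pm.
have hr : span_lat B r.
  by rewrite /r -[x *m Pm]scale1r; apply: span_comb => //; apply: proj_span.
have opt : forall i (s : R), (s = 1 \/ s = -1) -> 0 < s * r ord0 i -> s * x ord0 i = 1/2.
  move=> i s hs hsr.
  have hx := xin i.
  have hsx : s * x ord0 i <= 1/2 by case: hs => ->; move/andP: hx => [h1 h2]; lra.
  case: (ltrP (s * x ord0 i) (1/2)) => [lt|ge]; last by apply/eqP; rewrite eq_le hsx ge.
  exfalso.
  pose d : 'rV[R]_n := s *: delta_mx 0 i.
  pose dP := d *m Pm.
  pose q := ip G dP dP.
  have hq : 0 <= q := ip_ge0 dP.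
  have hg := Gii_pos HP HG i.
  pose a := s * (G i i * r ord0 i).
  have ha : 0 < a.
    have e : a = G i i * (s * r ord0 i) by rewrite /a; ring.
    by rewrite e mulr_gt0.
  have hrdP : ip G r dP = a.
    rewrite ip_sym // ip_projl // /d ipZl ip_sym // ip_delta //.
  pose gap := 1/2 - s * x ord0 i.
  have hgap : 0 < gap by rewrite /gap; lra.
  pose c := a / (q + 1).
  have hc : 0 < c by rewrite /c divr_gt0 //; lra.
  have hcq : c * (q + 1) = a by rewrite /c; field; apply: lt0r_neq0; lra.
  pose e := Order.min gap c.
  have he : 0 < e by rewrite /e lt_min hgap hc.
  have heg : e <= gap by rewrite /e ge_min lexx.
  have hec : e <= c by rewrite /e ge_min lexx orbT.
  have hin : x + e *: d \in @cube R n.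
    rewrite inE => j; rewrite !mxE.
    have [->|ji] := eqVneq j i.
      rewrite eqxx /= mulr1; move/andP: hx => [h1 h2].
      by rewrite /gap in heg; case: hs => hs; rewrite hs in heg *; apply/andP; split; lra.
    by rewrite andbF mulr0 mulr0 addr0; exact: xin.
  have := xmin _ hin.
  have -> : f (x + e *: d) = ip G (r - e *: dP) (r - e *: dP).
    by rewrite /f mulmxDl -scalemxAl /r /dP opprD addrA.
  rewrite ip_expand // ipZr ipZl ipZr hrdP -/q /f -/r => hle.
  have h1 : e * (2 * a) <= e * (e * q) by lra.
  rewrite ler_pM2l // in h1.
  have h2 : e * q <= c * q by rewrite ler_wpM2r.
  have h3 : c * q = a - c by rewrite -hcq; ring.
  have h4 : 2 * a <= a - c by rewrite -h3; exact: le_trans h1 h2.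
  move: h4 ha hc; clear; lra.
have [r0|rnz] := eqVneq r 0.
  exists x; first exact: xin.
  have yE : y = x *m Pm by apply/eqP; rewrite -subr_eq0 -/r r0.
  split => // z hz; rewrite yE; exact: projP.
exfalso.
have [u [hu hconf]] := conf_exists Hfree Hz hr rnz.
have hU : span_lat B (toR R u) by apply: lattice_span; case: hu.
case: hu => huL huE hu0 _.
set U := toR R u in hconf hU.
have hUe : forall i, U ord0 i = 0 \/ U ord0 i = 1 \/ U ord0 i = -1.
  move=> i; rewrite /U toRE; have := huE i; rewrite !inE.
  by case/or3P => /eqP ->; [right; right | left | right; left]; rewrite ?mulrN1z.
have hxU : forall i, U ord0 i * x ord0 i * 2 = U ord0 i * U ord0 i.
  move=> i; case: (hUe i) => [->|[h|h]]; first by rewrite !mul0r.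
  - have := hconf i; rewrite h oner_eq0 => /(_ isT) hp.
    have := opt i 1 (or_introl erefl) hp; rewrite !mul1r => ->; lra.
  - have := hconf i; rewrite h oppr_eq0 oner_eq0 => /(_ isT) hp.
    have := opt i (-1) (or_intror erefl) hp => hh.
    have : x ord0 i = - (1/2) by lra.
    move=> ->; lra.
have hxU2 : ip G x U * 2 = ip G U U.
  rewrite !(ip_diag HG) mulr_suml; apply: eq_bigr => i _.
  have e : G i i * x ord0 i * U ord0 i * 2 = G i i * (U ord0 i * x ord0 i * 2) by ring.
  by rewrite e hxU mulrA.
have [i0 ui0] := exists_nz hu0.
have hrU : 0 < ip G r U.
  rewrite (ip_diag HG) (bigD1 i0) //=.
  have Ui0 : U ord0 i0 != 0 by rewrite /U toRE intr_eq0.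
  have t1 : 0 < G i0 i0 * r ord0 i0 * U ord0 i0.
    have := hconf i0 Ui0; have := Gii_pos HP HG i0 => hg hp.
    have e : G i0 i0 * r ord0 i0 * U ord0 i0 = G i0 i0 * (U ord0 i0 * r ord0 i0) by ring.
    by rewrite e mulr_gt0.
  have t2 : 0 <= \sum_(i < n | i != i0) G i i * r ord0 i * U ord0 i.
    apply: sumr_ge0 => i _.
    have [Ui|Ui] := eqVneq (U ord0 i) 0; first by rewrite Ui mulr0.
    have := hconf i Ui; have := Gii_pos HP HG i => hg hp.
    have e : G i i * r ord0 i * U ord0 i = G i i * (U ord0 i * r ord0 i) by ring.
    by rewrite e mulr_ge0 // ltW.
  lra.
have hyU : ip G y U = ip G r U + ip G x U.
  by rewrite /r ipBl ip_projl //; ring.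
have := hDV u huL; rewrite ip_expand // -/U => hd.
exact: (final_arith hd hyU hrU hxU2).
Qed.

End HARD.

Lemma easy_arith (R : realType) (yV xV VV yy xx : R) :
  xx <= xx - 2 * xV + VV -> yV = xV -> yy <= yy - 2 * yV + VV.
Proof. lra. Qed.

Lemma easy (R : realType) (n k : nat) (B : 'M[int]_(k, n)) (G : 'M[R]_n) :
  is_inner_product G ->
  forall y, proj_image G (span_lat B) (DV_Zn G) y -> DV_lat G B y.
Proof.
move=> HP y [x hx [hy horth]]; split => // v hv.
have HS := HP.1.
have hV := lattice_span R hv.
have e : ip G y (toR R v) = ip G x (toR R v).
  by have := horth _ hV; rewrite ipBl => /eqP; rewrite subr_eq0 => /eqP.
rewrite ip_expand // e.
have := hx v; rewrite ip_expand //.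
move: (ip G x (toR R v)) (ip G (toR R v) (toR R v)) (ip G x x) (ip G y y) => a b c d h.
lra.
Qed.

Theorem theorem1 (R : realType) (n k : nat) (B : 'M[int]_(k, n)) (G : 'M[R]_n) :
  (0 < n)%N ->
  row_free (toR R B) ->
  is_inner_product G ->
  canonical_basis_orthogonal G ->
  zonotopal (lattice B) ->
  DV_lat G B = proj_image G (span_lat (R:=R) B) (DV_Zn G) /\
  proj_image G (span_lat (R:=R) B) (DV_Zn G) = proj_image G (span_lat (R:=R) B) (@cube R n).
Proof.
move=> _ Hfree HP HG Hz.
have Hc := DV_Zn_cube HP HG.
split; last by rewrite Hc.
apply/seteqP; split => y hy.
- by rewrite Hc; apply: hard.
- exact: easy hy.
Qed.
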